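(* Let $T_1=(Q_1,\Sigma,\Delta,R_1,q_1^0)$ and $T_2=(Q_2,\Delta,\Omega,R_2,q_2^0)$ be top-down tree transducers, let $A$ be the domain automaton of $T_2$, and let $\hat{T}_1$ be the product construction of $T_1$ and $A$. Then $\text{dom}(\hat{T}_1)=\text{dom}(T_1\circ T_2)$, and for every $s\in T_\Sigma$, $\hat{T}_1(s)=T_1(s)\cap\text{dom}(T_2)$.
   Context: A top-down tree transducer $T=(Q,\Sigma,\Delta,R,q_0)$ has finite state set $Q$, ranked input/output alphabets $\Sigma,\Delta$, initial state $q_0$, and finite rule set $R$ of rules $q(a(x_1,\dots,x_k))\to t$ with $a\in\Sigma_k$ ($\Sigma_k$ = symbols of rank $k$) and $t$ a tree over $\Delta$ whose leaves may additionally be of the form $q'(x_i)$, $q'\in Q$, $i\in[k]$; rules are used as rewrite rules in the usual way. $T(s)$ is the set of trees over $\Delta$ derivable from $q_0(s)$, $\text{dom}(T)=\{s\mid T(s)\neq\emptyset\}$; $\text{dom}(T_1\circ T_2)$ is the set of $s$ such that $T_2(t)\neq\emptyset$ for some $t\in T_1(s)$. For $q\in Q$, $a\in\Sigma_k$, $\text{rhs}_T(q,a)$ is the set of right-hand sides of rules with left-hand side $q(a(x_1,\dots,x_k))$; for a set $\Gamma$ of right-hand sides, $\Gamma[x_i]$ is the set of $q'\in Q$ with $q'(x_i)$ occurring in some tree of $\Gamma$. Domain automaton of $T$: the top-down tree automaton (transducer over $\Sigma$ with rules of the form $p(a(x_1,\dots,x_k))\to a(p_1(x_1),\dots,p_k(x_k))$)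 with states all subsets of $Q$, initial state $\{q_0\}$, rules $S(a(x_1,\dots,x_k))\to a(S_1(x_1),\dots,S_k(x_k))$ for every $a\in\Sigma_k$, nonempty $S=\{q_1,\dots,q_n\}\subseteq Q$ and nonempty $\Gamma_j\subseteq\text{rhs}_T(q_j,a)$ ($j\in[n]$), where $S_i=\bigcup_j\Gamma_j[x_i]$, and rules $\emptyset(a(x_1,\dots,x_k))\to a(\emptyset(x_1),\dots,\emptyset(x_k))$ for all $a$. Product construction of transducers $T=(Q,\Sigma,\Delta,R,q_0)$ and $T'=(Q',\Delta,\Omega,R',q'_0)$: the transducer with states $Q\times Q'$, input $\Sigma$, output $\Omega$, initial state $(q_0,q'_0)$, and, for every rule $q(a(x_1,\dots,x_k))\to\xi$ of $T$, every $p\in Q'$ and every tree $\zeta$ derivable from $p(\xi)$ using rules of $T'$ in which the leaves of $\xi$ of the form $q''(x_i)$ are treated as unrewritable symbols and a state $p'$ applied to such a leaf stays as $p'(q''(x_i))$, the rule $(q,p)(a(x_1,\dots,x_k))\to\zeta'$, where $\zeta'$ is obtained from $\zeta$ by replacing each $p'(q''(x_i))$ by $(q'',p')(x_i)$. *)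

(* Defs.v *)
From mathcomp Require Import all_boot.
From Stdlib Require List.

Set Implicit Arguments.
Unset Strict Implicit.
Unset Printing Implicit Defensive.

(* Trees over a ranked alphabet F (rank given separately by ar : F -> nat). *)
Inductive tree (F : Type) : Type := Node : F -> seq (tree F) -> tree F.
Arguments Node {F}.

Fixpoint wft (F : Type) (ar : F -> nat) (t : tree F) : bool :=
  let: Node f ts := t in (size ts == ar f) && all (wft ar) ts.

(* Right-hand sides: trees over D whose leaves may be q(x_i).
   RCall q i stands for q(x_{i+1}) (variables are 0-indexed). *)
Inductive rhs (Q D : Type) : Type :=
| RCall : Q -> nat -> rhs Q D
| RNode : D -> seq (rhs Q D) -> rhs Q D.
Arguments RCall {Q D}.
Arguments RNode {Q D}.

Fixpoint wfr (Q D : Type) (arD : D -> nat) (k : nat) (r : rhs Q D) : bool :=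
  match r with
  | RCall _ i => i < k
  | RNode d rs => (size rs == arD d) && all (wfr arD k) rs
  end.

Fixpoint calls (Q D : Type) (r : rhs Q D) : seq (Q * nat) :=
  match r with
  | RCall q i => [:: (q, i)]
  | RNode _ rs => flatten (map (@calls Q D) rs)
  end.

(* Top-down tree transducer: the rule set is the relation
   rule q a r  <->  q(a(x_1..x_k)) -> r is a rule. *)
Record tdtt (Q S D : Type) := TDTT {
  rule : Q -> S -> rhs Q D -> Prop;
  init : Q }.
Arguments TDTT {Q S D}.

Definition tt_finite (Q S D : Type) (T : tdtt Q S D) : Prop :=
  exists l : list (Q * S * rhs Q D),
    forall q a r, rule T q a r <-> List.In (q, a, r) l.

Definition tt_wf (Q S D : Type) (arS : S -> nat) (arD : D -> nat)
  (T : tdtt Q S D) : Prop :=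
  forall q a r, rule T q a r -> wfr arD (arS a) r.

(* Semantics of a right-hand side
   r applied to subtrees xs (for x_1..x_k): rhs_out T xs r t holds when t is
   obtained from r by replacing every occurrence of a leaf q(x_i)
   independently by some tree derivable from q(x_i). *)
Inductive out_st (Q S D : Type) (T : tdtt Q S D) : Q -> tree S -> tree D -> Prop :=
| out_rule q a ss r t :
    rule T q a r -> rhs_out T ss r t -> out_st T q (Node a ss) t
with rhs_out (Q S D : Type) (T : tdtt Q S D) :
    seq (tree S) -> rhs Q D -> tree D -> Prop :=
| ro_call xs q i x t :
    List.nth_error xs i = Some x -> out_st T q x t -> rhs_out T xs (RCall q i) t
| ro_node xs d rs ts :
    rhs_out_list T xs rs ts -> rhs_out T xs (RNode d rs) (Node d ts)
with rhs_out_list (Q S D : Type) (T : tdtt Q S D) :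
    seq (tree S) -> seq (rhs Q D) -> seq (tree D) -> Prop :=
| rol_nil xs : rhs_out_list T xs [::] [::]
| rol_cons xs r rs t ts :
    rhs_out T xs r t -> rhs_out_list T xs rs ts ->
    rhs_out_list T xs (r :: rs) (t :: ts).

Definition out (Q S D : Type) (T : tdtt Q S D) (s : tree S) (t : tree D) :=
  out_st T (init T) s t.

Definition in_dom (Q S D : Type) (T : tdtt Q S D) (s : tree S) :=
  exists t, out T s t.

Definition in_dom_comp (Q1 Q2 S D O : Type) (T1 : tdtt Q1 S D)
  (T2 : tdtt Q2 D O) (s : tree S) :=
  exists t u, out T1 s t /\ out T2 t u.

Section DomAut.
Variables (Q : finType) (D O : Type) (arD : D -> nat) (T : tdtt Q D O).

Definition dom_succ (S : {set Q}) (Gam : Q -> seq (rhs Q O)) (i : nat)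
  : {set Q} :=
  [set q' | [exists j in S, has (fun g => (q', i) \in calls g) (Gam j)]].

Definition dom_aut_rule (S : {set Q}) (a : D) (r : rhs {set Q} D) : Prop :=
  (S = set0 /\ r = RNode a [seq RCall set0 i | i <- iota 0 (arD a)])
  \/
  (S != set0 /\
   exists Gam : Q -> seq (rhs Q O),
     (forall j, j \in S ->
        Gam j <> [::] /\ forall g, List.In g (Gam j) -> rule T j a g) /\
     r = RNode a [seq RCall (dom_succ S Gam i) i | i <- iota 0 (arD a)]).

Definition dom_aut : tdtt {set Q} D D := TDTT dom_aut_rule [set init T].
End DomAut.

Section Product.
Variables (Q Q' S D O : Type) (T : tdtt Q S D) (T' : tdtt Q' D O).

(* pderiv p xi z : z is (the renamed form zeta' of) a tree zeta over O
   derivable from p(xi) using T', where leaves q''(x_i) of xi are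
   unrewritable and p'(q''(x_i)) is renamed into (q'',p')(x_i). *)
Inductive pderiv : Q' -> rhs Q D -> rhs (Q * Q') O -> Prop :=
| pd_call p q i : pderiv p (RCall q i) (RCall (q, p) i)
| pd_node p d xs r z :
    rule T' p d r -> prhs xs r z -> pderiv p (RNode d xs) z
with prhs : seq (rhs Q D) -> rhs Q' O -> rhs (Q * Q') O -> Prop :=
| pr_call xs p' j x z :
    List.nth_error xs j = Some x -> pderiv p' x z -> prhs xs (RCall p' j) z
| pr_node xs o rs zs : prhs_list xs rs zs -> prhs xs (RNode o rs) (RNode o zs)
with prhs_list : seq (rhs Q D) -> seq (rhs Q' O) -> seq (rhs (Q * Q') O) -> Prop :=
| prl_nil xs : prhs_list xs [::] [::]
| prl_cons xs r rs z zs :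
    prhs xs r z -> prhs_list xs rs zs -> prhs_list xs (r :: rs) (z :: zs).

Definition prod_rule (qp : Q * Q') (a : S) (z : rhs (Q * Q') O) : Prop :=
  exists xi, rule T qp.1 a xi /\ pderiv qp.2 xi z.

Definition product : tdtt (Q * Q') S O := TDTT prod_rule (init T, init T').
End Product.

(* Main.v *)
Require Import Defs.
From mathcomp Require Import all_boot.
From Stdlib Require Import ClassicalEpsilon.

Set Implicit Arguments.
Unset Strict Implicit.
Unset Printing Implicit Defensive.

Fixpoint rhs_ind2 (Q D : Type) (P : rhs Q D -> Prop)
  (Hc : forall q i, P (RCall q i))
  (Hn : forall d rs, (forall r, List.In r rs -> P r) -> P (RNode d rs))
  (r : rhs Q D) : P r :=
  match r with
  | RCall q i => Hc q i
  | RNode d rs => Hn d rs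
      ((fix go (l : seq (rhs Q D)) : forall r, List.In r l -> P r :=
         match l with
         | [::] => fun r H => False_ind _ H
         | r0 :: l' => fun r H =>
             match H with
             | or_introl e => eq_ind r0 P (rhs_ind2 Hc Hn r0) r e
             | or_intror H' => go l' r H'
             end
         end) rs)
  end.

Fixpoint tree_ind2 (F : Type) (P : tree F -> Prop)
  (Hn : forall a ts, (forall t, List.In t ts -> P t) -> P (Node a ts))
  (t : tree F) : P t :=
  match t with
  | Node a ts => Hn a ts
      ((fix go (l : seq (tree F)) : forall t, List.In t l -> P t :=
         match l with
         | [::] => fun t H => False_ind _ H
         | t0 :: l' => fun t H =>
             match H with
             | or_introl e => eq_ind t0 P (tree_ind2 Hn t0) t e
             | or_intror H' => go l' t H'
             end
         end) ts)
  end.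


Lemma inv_out (Q S D : Type) (T : tdtt Q S D) q a ss t :
  out_st T q (Node a ss) t <-> exists r, rule T q a r /\ rhs_out T ss r t.
Proof. split; [intro H; inversion H; subst; eauto | intros [r [H1 H2]]; econstructor; eauto]. Qed.

Lemma inv_call (Q S D : Type) (T : tdtt Q S D) xs q i t :
  rhs_out T xs (RCall q i) t <-> exists x, List.nth_error xs i = Some x /\ out_st T q x t.
Proof. split; [intro H; inversion H; subst; eauto | intros [r [H1 H2]]; econstructor; eauto]. Qed.

Lemma inv_node (Q S D : Type) (T : tdtt Q S D) xs d rs t :
  rhs_out T xs (RNode d rs) t <-> exists ts, t = Node d ts /\ rhs_out_list T xs rs ts.
Proof. split; [intro H; inversion H; subst; eauto | intros [r [H1 H2]]; subst; econstructor; eauto]. Qed.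

Lemma inv_nil (Q S D : Type) (T : tdtt Q S D) xs ts :
  rhs_out_list T xs [::] ts <-> ts = [::].
Proof. split; [intro H; inversion H; subst; eauto | intros ->; constructor]. Qed.

Lemma inv_cons (Q S D : Type) (T : tdtt Q S D) xs r rs ts :
  rhs_out_list T xs (r :: rs) ts <->
  exists t ts', ts = t :: ts' /\ rhs_out T xs r t /\ rhs_out_list T xs rs ts'.
Proof. split; [intro H; inversion H; subst; eauto 6 | intros [t [ts' [-> [H1 H2]]]]; constructor; auto]. Qed.

Lemma pinv_call (Q Q' D O : Type) (T : tdtt Q' D O) p (q : Q) i z :
  pderiv T p (RCall q i) z <-> z = RCall (q, p) i.
Proof. split; [intro H; inversion H; subst; eauto | intros ->; constructor]. Qed.

Lemma pinv_node (Q Q' D O : Type) (T : tdtt Q' D O) p d (xs : seq (rhs Q D)) z :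
  pderiv T p (RNode d xs) z <-> exists r, rule T p d r /\ prhs T xs r z.
Proof. split; [intro H; inversion H; subst; eauto | intros [r [H1 H2]]; econstructor; eauto]. Qed.

Lemma prinv_call (Q Q' D O : Type) (T : tdtt Q' D O) (xs : seq (rhs Q D)) p j z :
  prhs T xs (RCall p j) z <-> exists x, List.nth_error xs j = Some x /\ pderiv T p x z.
Proof. split; [intro H; inversion H; subst; eauto | intros [r [H1 H2]]; econstructor; eauto]. Qed.

Lemma prinv_node (Q Q' D O : Type) (T : tdtt Q' D O) (xs : seq (rhs Q D)) o rs z :
  prhs T xs (RNode o rs) z <-> exists zs, z = RNode o zs /\ prhs_list T xs rs zs.
Proof. split; [intro H; inversion H; subst; eauto | intros [r [H1 H2]]; subst; econstructor; eauto]. Qed.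

Lemma prinv_nil (Q Q' D O : Type) (T : tdtt Q' D O) (xs : seq (rhs Q D)) zs :
  prhs_list T xs [::] zs <-> zs = [::].
Proof. split; [intro H; inversion H; subst; eauto | intros ->; constructor]. Qed.

Lemma prinv_cons (Q Q' D O : Type) (T : tdtt Q' D O) (xs : seq (rhs Q D)) r rs zs :
  prhs_list T xs (r :: rs) zs <->
  exists z zs', zs = z :: zs' /\ prhs T xs r z /\ prhs_list T xs rs zs'.
Proof. split; [intro H; inversion H; subst; eauto 6 | intros [t [ts' [-> [H1 H2]]]]; constructor; auto]. Qed.

Lemma nth_error_cat (A : Type) (pre l : seq A) x :
  List.nth_error (pre ++ x :: l) (size pre) = Some x.
Proof. by elim: pre. Qed.

Lemma nth_error_lt (A : Type) (l : seq A) i :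
  i < size l -> exists y, List.nth_error l i = Some y.
Proof. elim: l i => [|a l IH] [|i] //=; eauto. Qed.

Lemma all_In (A : Type) (p : pred A) l x : all p l -> List.In x l -> p x.
Proof. elim: l => [|a l IH] //= /andP[Ha Hl] [<-|H]; auto. Qed.

Lemma mem_flat (A : Type) (B : eqType) (f : A -> seq B) rs x :
  x \in flatten (map f rs) -> exists r, List.In r rs /\ x \in f r.
Proof.
elim: rs => [|r rs IH] //=; rewrite mem_cat => /orP[H|H]; first by eauto.
by have [r' [H1 H2]] := IH H; eauto.
Qed.

Lemma calls_lt (Q : eqType) (D : Type) (ar : D -> nat) k (g : rhs Q D) q i :
  wfr ar k g -> (q, i) \in calls g -> i < k.
Proof.
elim/rhs_ind2: g => [q0 i0|d rs IH] /=.
  by move=> H; rewrite mem_seq1 => /eqP [_ ->].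
move=> /andP[_ Hall] /mem_flat [r [Hr Hm]].
exact: (IH r Hr (all_In Hall Hr) Hm).
Qed.

Lemma calls_out (Q : eqType) (S D : Type) (T : tdtt Q S D) ts (g : rhs Q D) u q i :
  rhs_out T ts g u -> (q, i) \in calls g ->
  exists y v, List.nth_error ts i = Some y /\ out_st T q y v.
Proof.
elim/rhs_ind2: g u => [q0 i0|d rs IH] u /=.
  move=> /inv_call [x [H1 H2]]; rewrite mem_seq1 => /eqP [-> ->]; eauto.
move=> /inv_node [us [_ Hl]] Hm.
elim: rs us IH Hl Hm => [|r rs IHl] us IH Hl //=.
move/inv_cons: Hl => [t [ts' [_ [H1 H2]]]].
rewrite mem_cat => /orP[H|H].
  by apply: (IH r (or_introl erefl) t H1 H).
by apply: (IHl ts') => // r' Hr'; apply: IH; right.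
Qed.

Lemma out_exists (Q : eqType) (S D : Type) (T : tdtt Q S D) ts (g : rhs Q D) :
  (forall q i, (q, i) \in calls g ->
     exists y v, List.nth_error ts i = Some y /\ out_st T q y v) ->
  exists u, rhs_out T ts g u.
Proof.
elim/rhs_ind2: g => [q0 i0|d rs IH] /= H.
  have [y [v [H1 H2]]] := H q0 i0 (mem_head _ _).
  by exists v; apply/inv_call; eauto.
suff [us Hus] : exists us, rhs_out_list T ts rs us.
  by exists (Node d us); apply/inv_node; eauto.
elim: rs IH H => [|r rs IHl] IH H /=; first by exists [::]; constructor.
have [t Ht] := IH r (or_introl erefl) (fun q i Hm => H q i ltac:(by rewrite /= mem_cat Hm)).
have [us Hus] := IHl (fun r' Hr' => IH r' (or_intror Hr'))
   (fun q i Hm => H q i ltac:(by rewrite /= mem_cat Hm orbT)).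
by exists (t :: us); constructor.
Qed.

Lemma LA (P S D : Type) (T : tdtt P S D) ts (f : nat -> P) m n :
  (exists us, rhs_out_list T ts [seq RCall (f i) i | i <- iota m n] us) <->
  forall i, m <= i < m + n ->
    exists y, List.nth_error ts i = Some y /\ exists u, out_st T (f i) y u.
Proof.
elim: n m => [|n IH] m /=.
  split=> [_ i|_]; first by rewrite addn0 => /andP[H1 H2]; move: (leq_ltn_trans H1 H2); rewrite ltnn.
  by exists [::]; constructor.
split.
  move=> [us /inv_cons [u [us' [_ [/inv_call [x [H1 H2]] H3]]]]] i /andP[Hi1 Hi2].
  case: (ltngtP m i) Hi1 => [Hmi|//|<-] _; last by eauto.
  by apply: (proj1 (IH m.+1) (ex_intro _ us' H3)); rewrite Hmi addSnnS.
move=> H.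
have [y [Hy [u Hu]]] := H m ltac:(by rewrite leqnn /= addnS ltnS leq_addr).
have [us Hus] := proj2 (IH m.+1) (fun i Hi => H i ltac:(move: Hi; rewrite addSnnS => /andP[Hi1 Hi2]; by rewrite (ltnW Hi1))).
exists (u :: us); constructor => //; apply/inv_call; eauto.
Qed.

Lemma rule_shape (Q : finType) (D O : Type) (arD : D -> nat) (T : tdtt Q D O) S d r :
  rule (dom_aut arD T) S d r ->
  exists f : nat -> {set Q}, r = RNode d [seq RCall (f i) i | i <- iota 0 (arD d)].
Proof.
case=> [[_ ->]|[_ [Gam [_ ->]]]]; first by exists (fun _ => set0).
by exists (dom_succ S Gam).
Qed.

Lemma accA_node (Q : finType) (D O : Type) (arD : D -> nat) (T : tdtt Q D O) S d ts :
  (exists u, out_st (dom_aut arD T) S (Node d ts) u) <->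
  exists f : nat -> {set Q},
    rule (dom_aut arD T) S d (RNode d [seq RCall (f i) i | i <- iota 0 (arD d)]) /\
    forall i, i < arD d ->
      exists y, List.nth_error ts i = Some y /\ exists u, out_st (dom_aut arD T) (f i) y u.
Proof.
split.
  move=> [u /inv_out [r [Hr Ho]]].
  have [f Hf] := rule_shape Hr; subst r.
  exists f; split => // i Hi.
  move/inv_node: Ho => [us [_ Hus]].
  by apply: (proj1 (LA _ _ _ _ _) (ex_intro _ us Hus)).
move=> [f [Hr H]].
have [us Hus] := proj2 (LA (dom_aut arD T) ts f 0 (arD d)) (fun i Hi => H i ltac:(by case/andP: Hi)).
exists (Node d us); apply/inv_out; exists (RNode d [seq RCall (f i) i | i <- iota 0 (arD d)]).
by split => //; apply/inv_node; eauto.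
Qed.

Lemma dom_char (Q : finType) (D O : Type) (arD : D -> nat) (arO : O -> nat)
  (T : tdtt Q D O) (wf : tt_wf arD arO T) t :
  wft arD t -> forall S,
  (exists u, out_st (dom_aut arD T) S t u) <-> forall q, q \in S -> exists u, out_st T q t u.
Proof.
elim/tree_ind2: t => d ts IH /= /andP[/eqP Hsz Hall] S.
split.
  move=> [u0 /inv_out [r [Hr Ho]]] q Hq.
  case: Hr => [[HS _]|[_ [Gam [HG Hr]]]]; first by move: Hq; rewrite HS inE.
  subst r; move/inv_node: Ho => [us [_ Hus]].
  have Hi := proj1 (LA _ _ _ _ _) (ex_intro _ us Hus).
  have [Hne Hrules] := HG q Hq.
  case EG: (Gam q) Hne Hrules => [|g rest] // _ Hrules.
  have Hg : rule T q d g by apply: Hrules; left.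
  have [u Hu] : exists u, rhs_out T ts g u.
    apply: out_exists => q' i Hm.
    have Hi' : i < arD d by apply: calls_lt (wf _ _ _ Hg) Hm.
    have [y [Hy Hay]] := Hi i ltac:(by rewrite add0n Hi').
    have Hyw : wft arD y := all_In Hall (List.nth_error_In _ _ Hy).
    have Hq' : q' \in dom_succ S Gam i.
      rewrite inE; apply/existsP; exists q; rewrite Hq /= EG /=.
      by rewrite Hm.
    have [v Hv] := proj1 (IH y (List.nth_error_In _ _ Hy) Hyw _) Hay q' Hq'.
    by eauto.
  by exists u; apply/inv_out; eauto.
move=> H.
apply/accA_node.
have Hsub : forall (f : nat -> {set Q}), (forall i, i < arD d -> forall q, q \in f i ->
     exists y v, List.nth_error ts i = Some y /\ out_st T q y v) ->
   forall i, i < arD d ->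
      exists y, List.nth_error ts i = Some y /\ exists u, out_st (dom_aut arD T) (f i) y u.
  move=> f Hf i Hi.
  have [y Hy] := nth_error_lt (ltac:(by rewrite Hsz) : i < size ts).
  exists y; split => //.
  have Hyw : wft arD y := all_In Hall (List.nth_error_In _ _ Hy).
  apply/(IH y (List.nth_error_In _ _ Hy) Hyw) => q Hq.
  have [y' [v [Hy' Hv]]] := Hf i Hi q Hq.
  by move: Hy'; rewrite Hy => -[E]; subst y'; eauto.
case: (eqVneq S set0) => HS.
  exists (fun _ => set0); split; first by left.
  by apply: Hsub => i _ q; rewrite inE.
have Hch : forall j, exists g, j \in S -> rule T j d g /\ exists u, rhs_out T ts g u.
  move=> j; case Hj: (j \in S); last by exists (RCall j 0).
  have [u /inv_out [g [H1 H2]]] := H j Hj.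
  by exists g; eauto.
pose G := fun j => proj1_sig (constructive_indefinite_description _ (Hch j)).
have HG : forall j, j \in S -> rule T j d (G j) /\ exists u, rhs_out T ts (G j) u.
  by move=> j; rewrite /G; case: (constructive_indefinite_description _ _).
exists (dom_succ S (fun j => [:: G j])); split.
  right; split => //; exists (fun j => [:: G j]); split => // j Hj.
  by split => // g [<-|[]]; case: (HG j Hj).
apply: Hsub => i Hi q; rewrite inE => /existsP [j /andP [Hj Hm]].
move: Hm; rewrite /= orbF => Hm.
have [_ [u Hu]] := HG j Hj.
exact: calls_out Hu Hm.
Qed.

Lemma wft_out (Q S D : Type) (arS : S -> nat) (arD : D -> nat) (T : tdtt Q S D)
  (wf : tt_wf arS arD T) s : forall q t, out_st T q s t -> wft arD t.
Proof.
elim/tree_ind2: s => a ss IH q t /inv_out [r [Hr Ho]].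
move: (wf _ _ _ Hr) => {Hr}.
elim/rhs_ind2: r t Ho => [q0 i|d rs IHr] t.
  move=> /inv_call [x [H1 H2]] _; exact: IH (List.nth_error_In _ _ H1) _ _ H2.
move=> /inv_node [ts [-> Hl]] /= /andP [/eqP <- Hall].
elim: rs ts IHr Hl Hall => [|r rs IHl] ts IHr Hl Hall.
  by move/inv_nil: Hl => ->.
move/inv_cons: Hl => [t' [ts' [-> [H1 H2]]]].
move: Hall => /= /andP [Hr Hall].
have := IHl ts' (fun r' Hr' => IHr r' (or_intror Hr')) H2 Hall.
move=> /andP [/eqP Hs Ha].
by rewrite /= eqSS Hs eqxx /= (IHr r (or_introl erefl) t' H1 Hr) Ha.
Qed.

Lemma core (Q1 Q2 : finType) (Sig Del Om : Type) (arD : Del -> nat)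
  (T1 : tdtt Q1 Sig Del) (T2 : tdtt Q2 Del Om) ss (f : nat -> {set Q2}) :
  forall (xs' pre : seq (rhs Q1 Del)) tpre ts', size tpre = size pre ->
  (forall x, List.In x xs' -> forall P t,
     (exists z, pderiv (dom_aut arD T2) P x z /\ rhs_out (product T1 (dom_aut arD T2)) ss z t)
     <-> rhs_out T1 ss x t /\ exists u, out_st (dom_aut arD T2) P t u) ->
  (exists zs, prhs_list (dom_aut arD T2) (pre ++ xs')
       [seq RCall (f i) i | i <- iota (size pre) (size xs')] zs /\
     rhs_out_list (product T1 (dom_aut arD T2)) ss zs ts')
  <-> rhs_out_list T1 ss xs' ts' /\
      exists us, rhs_out_list (dom_aut arD T2) (tpre ++ ts')
       [seq RCall (f i) i | i <- iota (size pre) (size xs')] us.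
Proof.
elim=> [|x xs IH] pre tpre ts' Hsz IHx /=.
  split.
    move=> [zs [/prinv_nil -> /inv_nil ->]]; split; first by constructor.
    by exists [::]; constructor.
  move=> [/inv_nil -> _]; exists [::]; split; constructor.
have IHx1 := IHx x (or_introl erefl).
have IHxs := fun x' (H : List.In x' xs) => IHx x' (or_intror H).
split.
  move=> [zs [/prinv_cons [z [zs' [-> [/prinv_call [x0 [Hn Hpd]] Hzs']]]]]].
  move: Hn; rewrite nth_error_cat => -[E]; subst x0.
  move=> /inv_cons [t [ts'' [-> [Hzt Hrest]]]].
  have [Hxt Hacc] := proj1 (IHx1 _ _) (ex_intro _ z (conj Hpd Hzt)).
  have := proj1 (IH (rcons pre x) (rcons tpre t) ts'' ltac:(by rewrite !size_rcons Hsz) IHxs).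
  rewrite !cat_rcons size_rcons => H.
  have [Hl [us Hus]] := H (ex_intro _ zs' (conj Hzs' Hrest)).
  split; first by constructor.
  case: Hacc => u Hu.
  exists (u :: us); constructor => //; apply/inv_call; exists t; split => //.
  by rewrite -Hsz nth_error_cat.
move=> [/inv_cons [t [ts'' [-> [Hxt Hl]]]] [us /inv_cons [u [us' [_ [/inv_call [y [Hy Hu]] Hus']]]]]].
move: Hy; rewrite -Hsz nth_error_cat => -[E]; subst y.
have [z [Hpd Hzt]] := proj2 (IHx1 _ _) (conj Hxt (ex_intro _ u Hu)).
have := proj2 (IH (rcons pre x) (rcons tpre t) ts'' ltac:(by rewrite !size_rcons Hsz) IHxs).
rewrite !cat_rcons size_rcons => H.
have [zs [Hzs Hrest]] := H (conj Hl (ex_intro _ us' Hus')).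
exists (z :: zs); rewrite Hsz; split; constructor => //.
by apply/prinv_call; exists x; rewrite nth_error_cat.
Qed.

Lemma rhsP (Q1 Q2 : finType) (Sig Del Om : Type) (arD : Del -> nat)
  (T1 : tdtt Q1 Sig Del) (T2 : tdtt Q2 Del Om) ss :
  (forall x, List.In x ss -> forall q P t,
     out_st (product T1 (dom_aut arD T2)) (q, P) x t <->
     out_st T1 q x t /\ exists u, out_st (dom_aut arD T2) P t u) ->
  forall xi k, wfr arD k xi -> forall P t,
  (exists z, pderiv (dom_aut arD T2) P xi z /\ rhs_out (product T1 (dom_aut arD T2)) ss z t)
  <-> rhs_out T1 ss xi t /\ exists u, out_st (dom_aut arD T2) P t u.
Proof.
move=> IHss xi k; elim/rhs_ind2: xi => [q i|d xs IH] /=.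
  move=> _ P t; split.
    move=> [z [/pinv_call -> /inv_call [x [Hn Ho]]]].
    have [H1 H2] := proj1 (IHss x (List.nth_error_In _ _ Hn) q P t) Ho.
    by split => //; apply/inv_call; eauto.
  move=> [/inv_call [x [Hn Ho]] Hacc].
  exists (RCall (q, P) i); split; first by constructor.
  by apply/inv_call; exists x; split => //; apply/(IHss x (List.nth_error_In _ _ Hn)).
move=> /andP [/eqP Hsz Hall] P t.
have IHx : forall x, List.In x xs -> forall P t,
     (exists z, pderiv (dom_aut arD T2) P x z /\ rhs_out (product T1 (dom_aut arD T2)) ss z t)
     <-> rhs_out T1 ss x t /\ exists u, out_st (dom_aut arD T2) P t u.
  by move=> x Hx; apply: IH Hx (all_In Hall Hx).
split.
  move=> [z [/pinv_node [r [Hr Hpr]] Hro]].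
  have [f Hf] := rule_shape Hr; subst r.
  move/prinv_node: Hpr => [zs [Ez Hzs]]; subst z.
  move/inv_node: Hro => [ts [-> Hts]].
  have := proj1 (@core _ _ _ _ _ arD T1 T2 ss f xs [::] [::] ts erefl IHx).
  rewrite /= Hsz => H.
  have [Hl [us Hus]] := H (ex_intro _ zs (conj Hzs Hts)).
  split; first by apply/inv_node; eauto.
  exists (Node d us); apply/inv_out; eexists; split; first exact: Hr.
  by apply/inv_node; eauto.
move=> [/inv_node [ts [-> Hl]] [u /inv_out [r [Hr Hou]]]].
have [f Hf] := rule_shape Hr; subst r.
move/inv_node: Hou => [us [_ Hus]].
have := proj2 (@core _ _ _ _ _ arD T1 T2 ss f xs [::] [::] ts erefl IHx).
rewrite /= Hsz => H.
have [zs [Hzs Hts]] := H (conj Hl (ex_intro _ us Hus)).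
exists (RNode d zs); split; last by apply/inv_node; eauto.
by apply/pinv_node; eexists; split; first exact: Hr; apply/prinv_node; eauto.
Qed.

Lemma prodP (Q1 Q2 : finType) (Sig Del Om : Type) (arS : Sig -> nat) (arD : Del -> nat)
  (T1 : tdtt Q1 Sig Del) (T2 : tdtt Q2 Del Om) (wf1 : tt_wf arS arD T1) s :
  forall q P t,
     out_st (product T1 (dom_aut arD T2)) (q, P) s t <->
     out_st T1 q s t /\ exists u, out_st (dom_aut arD T2) P t u.
Proof.
elim/tree_ind2: s => a ss IH q P t.
have IHss := fun x Hx => IH x Hx.
split.
  move=> /inv_out [z [[xi [Hxi Hpd]] Hro]].
  have [H1 H2] := proj1 (rhsP IHss (wf1 _ _ _ Hxi) P t) (ex_intro _ z (conj Hpd Hro)).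
  by split => //; apply/inv_out; eauto.
move=> [/inv_out [xi [Hxi Hro]] Hacc].
have [z [Hpd Hz]] := proj2 (rhsP IHss (wf1 _ _ _ Hxi) P t) (conj Hro Hacc).
by apply/inv_out; exists z; split => //; exists xi.
Qed.

Unset Implicit Arguments.

Theorem lemma14 (Q1 Q2 : finType) (Sig Del Om : finType)
  (arS : Sig -> nat) (arD : Del -> nat) (arO : Om -> nat)
  (T1 : tdtt Q1 Sig Del) (T2 : tdtt Q2 Del Om)
  (wf1 : tt_wf arS arD T1) (wf2 : tt_wf arD arO T2)
  (fin1 : tt_finite T1) (fin2 : tt_finite T2) :
  let A := dom_aut arD T2 in
  let T1h := product T1 A in
  (forall s, wft arS s -> (in_dom T1h s <-> in_dom_comp T1 T2 s)) /\
  (forall s, wft arS s -> forall t, out T1h s t <-> out T1 s t /\ in_dom T2 t).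
Proof.
move=> A T1h.
have key : forall s t, out T1h s t <-> out T1 s t /\ in_dom T2 t.
  move=> s t; rewrite /out /T1h /A /=.
  rewrite (prodP T2 wf1); split.
    move=> [Ho Hacc]; split => //.
    have := proj1 (dom_char wf2 (wft_out wf1 Ho) [set init T2]) Hacc (init T2) (set11 _).
    by [].
  move=> [Ho Hd]; split => //.
  apply/(dom_char wf2 (wft_out wf1 Ho)) => q; rewrite inE => /eqP ->; exact: Hd.
split => s _.
  split.
    move=> [t /key [H1 H2]]; rewrite /in_dom_comp; case: H2 => u Hu; eauto.
  by move=> [t [u [H1 H2]]]; exists t; apply/key; split => //; exists u.
exact: key.
Qed.
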